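(* There are infinitely many positive integers $n$ for which there exists a function $\sigma\colon E(K_{4n})\to\{-1,1\}$ with $\sigma\left(E(K_{4n})\right)=2$ such that $\sigma(M)\neq 0$ for every perfect matching $M$ in $K_{4n}$.
   Context: $K_{4n}$ denotes the complete graph on $4n$ vertices and $E(K_{4n})$ its edge set. For a set $F$ of edges, $\sigma(F)=\sum_{e\in F}\sigma(e)$. *)

(* Defs.v *)
From mathcomp Require Import all_boot all_order all_algebra.
Set Implicit Arguments. Unset Strict Implicit. Unset Printing Implicit Defensive.
Import GRing.Theory Num.Theory.

(* Complete graph on vertex set V: the edges are the 2-element subsets of V. *)
Definition is_edge (V : finType) (e : {set V}) : bool := #|e| == 2.

Definition edges (V : finType) : {set {set V}} := [set e | is_edge e].

Definition perfect_matching (V : finType) (M : {set {set V}}) : bool :=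
  [&& M \subset edges V, trivIset M & cover M == [set: V]].

Definition sigma_sum (V : finType) (sigma : {set V} -> int) (F : {set {set V}}) : int :=
  (\sum_(e in F) sigma e)%R.

Definition signing (V : finType) (sigma : {set V} -> int) : Prop :=
  forall e, is_edge e -> sigma e = 1%R \/ sigma e = (-1)%R.

(* Main.v *)
Require Import Defs.
From mathcomp Require Import all_boot all_order all_algebra.
From mathcomp Require Import zify ring lra.
Set Implicit Arguments. Unset Strict Implicit. Unset Printing Implicit Defensive.
Import GRing.Theory Num.Theory.

Lemma binD2 a b : 'C(a + b, 2) = 'C(a, 2) + 'C(b, 2) + a * b.
Proof.
elim: b => [|b IH]; first by rewrite bin0n addn0 muln0 /= !addn0.
rewrite addnS binS IH bin1 (binS b 1) bin1. lia.
Qed.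
Lemma bin2x x : 'C(x, 2) * 2 = x * x.-1.
Proof.
elim: x => [|x IH] //=; rewrite binS bin1 mulnDl IH; case: x {IH} => //= x; lia.
Qed.

Section Gen.
Variable V : finType.
Variable S : {set V}.

Definition sg (e : {set V}) : int := if #|e :&: S| == 1%N then (-1)%R else 1%R.

Lemma sum_sg (A : {set {set V}}) :
  sigma_sum sg A = (#|A|%:Z - 2 * (\sum_(e in A) (#|e :&: S| == 1%N) : nat)%:Z)%R.
Proof.
rewrite /sigma_sum.
have -> : (\sum_(e in A) sg e = \sum_(e in A) (1 - 2 * ((#|e :&: S| == 1%N) : nat)%:Z))%R.
  by apply: eq_bigr => e _; rewrite /sg; case: eqP.
rewrite sumrB sumr_const -mulr_sumr.
by rewrite pmulrn intz (big_morph Posz PoszD (erefl (Posz 0))).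
Qed.


Lemma sum_sub (B : {set V}) : \sum_(e in edges V) (e \subset B : nat) = 'C(#|B|, 2).
Proof.
rewrite -cards_draws -sum1dep_card big_mkcond [RHS]big_mkcond /=.
by apply: eq_bigr => e _; rewrite /edges !inE /is_edge andbC; case: (#|e| == 2); case: (e \subset B).
Qed.

Lemma indic (e : {set V}) : #|e| = 2 ->
  (#|e :&: S| == 1%N) + (e \subset S) + (e \subset ~: S) = 1.
Proof.
move=> e2.
have h1 : (e \subset S) = (#|e :&: S| == 2).
  rewrite -e2 (subset_leqif_cards (subsetIl e S)).2; apply/idP/eqP; first by move/setIidPl.
  by move=> h; apply/setIidPl.
have h2 : (e \subset ~: S) = (#|e :&: S| == 0).
  by rewrite -disjoints_subset -setI_eq0 cards_eq0.
have : #|e :&: S| <= 2 by rewrite -e2 subset_leq_card // subsetIl.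
rewrite h1 h2; case: #|e :&: S| => [|[|[|]]] //.
Qed.

Lemma cross_edges : \sum_(e in edges V) (#|e :&: S| == 1%N) = #|S| * #|~: S|.
Proof.
have tot : #|edges V| = 'C(#|S| + #|~: S|, 2).
  rewrite cardsC /edges -card_draws; apply: eq_card => e; rewrite !inE.
  by [].
have : \sum_(e in edges V) ((#|e :&: S| == 1%N) + (e \subset S) + (e \subset ~: S)) = #|edges V|.
  rewrite -sum1_card; apply: eq_bigr => e; rewrite /edges inE /is_edge => /eqP; exact: indic.
rewrite !big_split /= !sum_sub tot binD2; lia.
Qed.


Lemma match_facts (M : {set {set V}}) : perfect_matching M ->
  #|M| * 2 = #|V| /\ odd #|S| = odd (\sum_(e in M) (#|e :&: S| == 1%N)).
Proof.
case/and3P => sub tri /eqP cov.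
have e2 : forall e, e \in M -> #|e| = 2.
  by move=> e /(subsetP sub); rewrite /edges inE /is_edge => /eqP.
split.
  rewrite -cardsT -cov -(eqP tri) -sum_nat_const; by apply: eq_bigr => e /e2.
have hS : #|S| = \sum_(A in M) #|A :&: S|.
  have := @big_trivIset_cond _ _ _ addn M (mem S) (fun _ => 1) tri.
  rewrite cov => h.
  have -> : #|S| = \big[addn/0]_(x in [set: V] | mem S x) 1.
    by rewrite -sum1_card; apply: eq_bigl => x; rewrite !inE.
  rewrite h; apply: eq_bigr => A _.
  by rewrite -sum1_card; apply: eq_bigl => x; rewrite !inE andbC.
rewrite hS; apply: (big_ind2 (fun a b => odd a = odd b)) => //.
  by move=> a b c d h1 h3; rewrite !oddD h1 h3.
move=> e /e2 h2; have : #|e :&: S| <= 2 by rewrite -h2 subset_leq_card // subsetIl.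
by case: #|e :&: S| => [|[|[|]]].
Qed.

End Gen.

Lemma arith m c q p : m * 2 = 4 * (4 * p) -> m = (1 + 1) * c -> (2 * q).+1 = c -> False.
Proof. lia. Qed.

Theorem proposition2 :
  forall N : nat, exists n : nat, (N < n)%N /\
    exists sigma : {set 'I_(4 * n)} -> int,
      signing sigma /\
      sigma_sum sigma (edges 'I_(4 * n)) = 2%R /\
      forall M : {set {set 'I_(4 * n)}},
        perfect_matching M -> sigma_sum sigma M <> 0%R.
Proof.
move=> N.
pose n := 4 * (N.+1 * N.+2).
pose k := (4 * N * N + 11 * N + 6).*2.+1.
exists n; split; first by rewrite /n; nia.
have hk : k <= 4 * n by rewrite /k /n; nia.
pose S := [set widen_ord hk i | i : 'I_k].
have cS : #|S| = k.
  rewrite card_imset ?cardsT ?card_ord //.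
  by move=> x y /(congr1 val) /= /val_inj.
have cSc : #|~: S| = 4 * n - k by have := cardsC S; rewrite card_ord cS; lia.
exists (sg S); split; [|split].
- by move=> e _; rewrite /sg; case: ifP; [right|left].
- rewrite sum_sg cross_edges.
  have -> : #|edges 'I_(4 * n)| = 'C(4 * n, 2).
    by rewrite /edges -[in RHS](card_ord (4 * n)) -card_draws; apply: eq_card => e; rewrite !inE.
  have hC := bin2x (4 * n).
  have hC' : 'C(4 * n, 2) = 2 + 2 * (#|S| * #|~: S|).
    have hx : 4 * n = 16 * N * N + 48 * N + 32 by rewrite /n; nia.
    have hb : 4 * n - k = 8 * N * N + 26 * N + 19 by rewrite hx /k; lia.
    have hk' : k = 8 * N * N + 22 * N + 13 by rewrite /k; lia.
    rewrite cSc hb cS hk'; rewrite hx /= in hC *; nia.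
  by rewrite hC' PoszD PoszM addrK.
- move=> M pm; case: (match_facts S pm) => hM hodd.
  rewrite sum_sg.
  set c := (\sum_(e in M) _)%N in hodd *.
  have oc : odd c by rewrite -hodd cS /k /= odd_double.
  have := odd_double_half c; rewrite oc card_ord in hM *.
  move=> hc; rewrite /n in hM; rewrite add1n in hc; set P := N.+1 * N.+2 in hM; move=> /eqP; rewrite subr_eq0 -PoszM => /eqP [] h; rewrite -mul2n in hc; exact: (arith hM h hc).
Qed.
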